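(* No randomized mechanism that is truthful in expectation (without money and with verification) for CAs with known $2$-minded bidders has expected approximation ratio at most $1.09$. This holds even restricted to instances with $n=2$ bidders and $m=2$ goods.
   Context: Combinatorial auction with a set $\mathsf U$ of $m$ goods (single copy each) and $n$ bidders; bidder $i$ has a public collection $\mathcal S_i$ of $k$ nonempty subsets of $\mathsf U$ (known bidders; here $k=2$) and a private valuation $v_i:\mathcal S_i\to\mathbb R_{\ge0}$, extended by $v_i(T)=\max\{v_i(S'):S'\in\mathcal S_i,S'\subseteq T\}$ ($0$ if none). A declaration is any valuation $b_i:\mathcal S_i\to\mathbb R_{\ge0}$. A randomized mechanism maps declarations to a probability distribution over feasible allocations (pairwise disjoint sets with $A_i\in\mathcal S_i\cup\{\emptyset\}$). It is truthful in expectation (with verification) if for all $i$, $\mathbf b_{-i}$, true $v_i$ and every declaration $b_i$ that never overbids on an awarded set (i.e., $b_i(A_i(b_i,\mathbf b_{-i}))\le v_i(A_i(b_i,\mathbf b_{-i}))$ for every outcome of the randomization), $\mathbb E[v_i(A_i(v_i,\mathbf b_{-i}))]\ge\mathbb E[v_i(A_i(b_i,\mathbf b_{-i}))]$. Expected approximation ratio $\alpha$: on every truthful input, the expected social welfare is at least $\mathrm{OPT}/\alpha$, where $\mathrm{OPT}$ is the maximum welfare of a feasible allocation. *)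

(* Defs.v *)
From mathcomp Require Import all_boot.
From Stdlib Require Import Reals.
Set Implicit Arguments. Unset Strict Implicit. Unset Printing Implicit Defensive.

Local Open Scope R_scope.

Definition Rsum (T : finType) (f : T -> R) : R :=
  foldr Rplus 0 (map f (enum T)).

(* goods are 'I_m, bidders are 'I_n; bundles are {set 'I_m} *)
Definition collections (n m : nat) := 'I_n -> {set {set 'I_m}}.
(* a declaration/valuation profile: bidder i's value on each bundle
   (only the values on sets of S i are meaningful) *)
Definition profile (n m : nat) := 'I_n -> {set 'I_m} -> R.
Definition allocation (n m : nat) := {ffun 'I_n -> {set 'I_m}}.

Definition kminded (n m k : nat) (S : collections n m) : Prop :=
  forall i, #|S i| = k /\ set0 \notin S i.

Definition valid_val (n m : nat) (S : collections n m) (i : 'I_n)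
  (v : {set 'I_m} -> R) : Prop :=
  forall T, T \in S i -> 0 <= v T.

Definition valid_profile (n m : nat) (S : collections n m) (d : profile n m) :=
  forall i, valid_val S i (d i).

Definition vext (n m : nat) (S : collections n m) (i : 'I_n)
  (v : {set 'I_m} -> R) (T : {set 'I_m}) : R :=
  foldr Rmax 0 (map v [seq S' <- enum {set 'I_m} | (S' \in S i) && (S' \subset T)]).

Definition feasible (n m : nat) (S : collections n m) (A : allocation n m) : Prop :=
  (forall i, A i \in S i \/ A i = set0) /\
  (forall i j, i <> j -> [disjoint A i & A j]).

Definition is_distribution (n m : nat) (S : collections n m)
  (p : allocation n m -> R) : Prop :=
  (forall A, 0 <= p A) /\ Rsum p = 1 /\ (forall A, 0 < p A -> feasible S A).

(* randomized mechanism: given public collections and declarations,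
   returns the probability of each allocation *)
Definition mechanism (n m : nat) := collections n m -> profile n m -> allocation n m -> R.

Definition expect (n m : nat) (p : allocation n m -> R) (f : allocation n m -> R) : R :=
  Rsum (fun A => p A * f A).

Definition welfare (n m : nat) (S : collections n m) (v : profile n m)
  (A : allocation n m) : R :=
  Rsum (fun i => vext S i (v i) (A i)).

Definition OPT (n m : nat) (S : collections n m) (v : profile n m) : R :=
  foldr Rmax 0 (map (welfare S v)
    [seq A : allocation n m <- enum (allocation n m) | [forall i, (A i \in S i) || (A i == set0)] &&
        [forall i, forall j, (i != j) ==> [disjoint A i & A j]]]).

Definition upd (n m : nat) (d : profile n m) (i : 'I_n) (b : {set 'I_m} -> R) : profile n m :=
  fun j => if j == i then b else d j.

Definition well_defined (n m k : nat) (M : mechanism n m) : Prop :=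
  forall S d, kminded k S -> valid_profile S d -> is_distribution S (M S d).

Definition truthful_in_expectation (n m k : nat) (M : mechanism n m) : Prop :=
  forall S d i (v b : {set 'I_m} -> R),
    kminded k S -> valid_profile S d -> valid_val S i v -> valid_val S i b ->
    (forall A, 0 < M S (upd d i b) A ->
       vext S i b (A i) <= vext S i v (A i)) ->
    expect (M S (upd d i b)) (fun A => vext S i v (A i))
      <= expect (M S (upd d i v)) (fun A => vext S i v (A i)).

Definition approx_ratio (n m k : nat) (M : mechanism n m) (alpha : R) : Prop :=
  forall S v, kminded k S -> valid_profile S v ->
    OPT S v / alpha <= expect (M S v) (welfare S v).

(* Main.v *)
Require Import Defs.
From mathcomp Require Import all_boot.
From Stdlib Require Import Reals Lra.
Local Open Scope R_scope.

Definition o1 : 'I_2 := @Ordinal 2 1 isT.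
Definition sa : {set 'I_2} := [set ord0].
Definition sb : {set 'I_2} := [set o1].

Lemma Rsum_I2 (f : 'I_2 -> R) : Rsum f = f ord0 + f o1.
Proof.
rewrite /Rsum (enum_ordSl 1) (enum_ordSl 0) /=.
have -> : enum 'I_0 = [::] by apply: size0nil; rewrite size_enum_ord.
have -> : lift ord0 ord0 = o1 :> 'I_2 by apply: val_inj.
simpl; ring.
Qed.

Lemma sum_le (T : finType) (f g : T -> R) :
  (forall x, f x <= g x) -> Rsum f <= Rsum g.
Proof.
move=> H; rewrite /Rsum; elim: (enum T) => [|x l IH] /=; first lra.
have := H x; lra.
Qed.

Lemma sum_lin3 (T : finType) (a b c : R) (f g h : T -> R) :
  Rsum (fun x => a * f x + b * g x + c * h x) = a * Rsum f + b * Rsum g + c * Rsum h.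
Proof.
rewrite /Rsum; elim: (enum T) => [|x l IH] /=; first ring.
rewrite IH; ring.
Qed.

Lemma sum_lin1 (T : finType) (a : R) (f : T -> R) :
  Rsum (fun x => a * f x) = a * Rsum f.
Proof.
rewrite /Rsum; elim: (enum T) => [|x l IH] /=; first ring.
rewrite IH; ring.
Qed.

Lemma mul_bound (m w b : R) : 0 <= m -> (0 < m -> w <= b) -> m * w <= m * b.
Proof.
move=> H0 H; case: (Rle_lt_or_eq_dec 0 m H0) => Hm.
  apply: Rmult_le_compat_l => //; exact: H.
rewrite -Hm; lra.
Qed.

Section V.
Variables (n m : nat) (S : collections n m) (i : 'I_n).

Lemma fold_ge (v : {set 'I_m} -> R) (l : seq {set 'I_m}) x :
  x \in l -> v x <= foldr Rmax 0 (map v l).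
Proof.
elim: l => [|y l IH] //=; rewrite in_cons => /orP [/eqP -> | H].
  exact: Rmax_l.
apply: Rle_trans (IH H) _; exact: Rmax_r.
Qed.

Lemma fold_le (v : {set 'I_m} -> R) (l : seq {set 'I_m}) c :
  0 <= c -> (forall x, x \in l -> v x <= c) -> foldr Rmax 0 (map v l) <= c.
Proof.
move=> Hc; elim: l => [|y l IH] H //=.
apply: Rmax_lub; first by apply: H; rewrite mem_head.
apply: IH => x Hx; apply: H; by rewrite in_cons Hx orbT.
Qed.

Lemma fold_ge0 (v : {set 'I_m} -> R) (l : seq {set 'I_m}) :
  0 <= foldr Rmax 0 (map v l).
Proof.
elim: l => [|y l IH] /=; first lra.
apply: Rle_trans IH _; exact: Rmax_r.
Qed.

Lemma fold_mono (v w : {set 'I_m} -> R) (l : seq {set 'I_m}) :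
  (forall x, v x <= w x) -> foldr Rmax 0 (map v l) <= foldr Rmax 0 (map w l).
Proof.
move=> H; elim: l => [|y l IH] /=; first lra.
apply: Rmax_lub.
  apply: Rle_trans (H y) _; exact: Rmax_l.
apply: Rle_trans IH _; exact: Rmax_r.
Qed.

Lemma vext_ge (v : {set 'I_m} -> R) (T S' : {set 'I_m}) : S' \in S i -> S' \subset T -> v S' <= vext S i v T.
Proof.
move=> H1 H2; apply: fold_ge; by rewrite mem_filter H1 H2 mem_enum.
Qed.

Lemma vext_ge0 (v : {set 'I_m} -> R) (T : {set 'I_m}) : 0 <= vext S i v T.
Proof. exact: fold_ge0. Qed.

Lemma vext_le (v : {set 'I_m} -> R) (T : {set 'I_m}) c : 0 <= c ->
  (forall S', S' \in S i -> S' \subset T -> v S' <= c) -> vext S i v T <= c.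
Proof.
move=> Hc H; apply: fold_le => // x; rewrite mem_filter => /andP [/andP [H1 H2] _].
exact: H.
Qed.

Lemma vext_mono (v w : {set 'I_m} -> R) (T : {set 'I_m}) : (forall X, v X <= w X) -> vext S i v T <= vext S i w T.
Proof. move=> H; exact: fold_mono. Qed.

Lemma vext_set0 (v : {set 'I_m} -> R) : set0 \notin S i -> vext S i v set0 <= 0.
Proof.
move=> H; apply: vext_le; first lra.
move=> S' HS; rewrite subset0 => /eqP E; move: HS; rewrite E => HS.
by rewrite HS in H.
Qed.
End V.

Lemma sa_neT : (sa == setT) = false.
Proof.
apply/negbTE/eqP => H; have : o1 \in sa by rewrite H inE.
by rewrite in_set1.
Qed.
Lemma sb_neT : (sb == setT) = false.
Proof.
apply/negbTE/eqP => H; have : ord0 \in sb by rewrite H inE.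
by rewrite in_set1.
Qed.
Lemma s0_nea : (set0 == sa) = false.
Proof.
apply/negbTE/eqP => H; have : ord0 \in sa by rewrite in_set1.
by rewrite -H inE.
Qed.
Lemma s0_neb : (set0 == sb) = false.
Proof.
apply/negbTE/eqP => H; have : o1 \in sb by rewrite in_set1.
by rewrite -H inE.
Qed.
Lemma s0_neT : (set0 == [set: 'I_2]) = false.
Proof.
apply/negbTE/eqP => H; have : o1 \in [set: 'I_2] by rewrite inE.
by rewrite -H inE.
Qed.
Lemma T_nea : ([set: 'I_2] == sa) = false.
Proof. by rewrite eq_sym sa_neT. Qed.

Definition L : R := 81/50.
Definition SS : collections 2 2 :=
  fun i => if i == ord0 then [set sa; setT] else [set sb; setT].
Definition vP1 : {set 'I_2} -> R :=
  fun T => if T == sa then 1 else if T == setT then L else 0.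
Definition vQ1 : {set 'I_2} -> R := fun T => if T == setT then L else 0.
Definition v2 : {set 'I_2} -> R := fun T => if T == sb then 1 else 0.
Definition d0 : profile 2 2 := fun _ => v2.
Definition PP := upd d0 ord0 vP1.
Definition QQ := upd d0 ord0 vQ1.

Lemma SS0 : SS ord0 = [set sa; setT]. Proof. by []. Qed.
Lemma SS1 : SS o1 = [set sb; setT]. Proof. by []. Qed.

Lemma kmin : kminded 2 SS.
Proof.
move=> i; rewrite /SS; case: (i == ord0).
  by rewrite cards2 sa_neT !inE s0_nea s0_neT.
by rewrite cards2 sb_neT !inE s0_neb s0_neT.
Qed.

Lemma vP1_ge0 X : 0 <= vP1 X.
Proof. rewrite /vP1 /L; case: (X == sa); [lra|case: (X == setT); lra]. Qed.
Lemma vQ1_ge0 X : 0 <= vQ1 X.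
Proof. rewrite /vQ1 /L; case: (X == setT); lra. Qed.
Lemma v2_ge0 X : 0 <= v2 X.
Proof. rewrite /v2; case: (X == sb); lra. Qed.
Lemma v2_le1 X : v2 X <= 1.
Proof. rewrite /v2; case: (X == sb); lra. Qed.
Lemma vP1_leL X : vP1 X <= L.
Proof. rewrite /vP1 /L; case: (X == sa); [lra|case: (X == setT); lra]. Qed.
Lemma vQ1_le_vP1 X : vQ1 X <= vP1 X.
Proof.
rewrite /vQ1 /vP1; case: (X =P setT) => [->|_]; first by rewrite T_nea; lra.
case: (X == sa); lra.
Qed.

Lemma valid_d0 : valid_profile SS d0.
Proof. move=> i T _; exact: v2_ge0. Qed.

Lemma PP0 : PP ord0 = vP1. Proof. by rewrite /PP /upd eqxx. Qed.
Lemma PP1 : PP o1 = v2. Proof. by []. Qed.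
Lemma QQ0 : QQ ord0 = vQ1. Proof. by rewrite /QQ /upd eqxx. Qed.
Lemma QQ1 : QQ o1 = v2. Proof. by []. Qed.

Lemma validP : valid_profile SS PP.
Proof.
move=> i T _; rewrite /PP /upd; case: (i == ord0); [exact: vP1_ge0|exact: v2_ge0].
Qed.
Lemma validQ : valid_profile SS QQ.
Proof.
move=> i T _; rewrite /QQ /upd; case: (i == ord0); [exact: vQ1_ge0|exact: v2_ge0].
Qed.

Lemma feas_cases (A : allocation 2 2) : feasible SS A ->
  [/\ A ord0 = sa \/ A ord0 = setT \/ A ord0 = set0,
      A o1 = sb \/ A o1 = setT \/ A o1 = set0 &
      [disjoint A ord0 & A o1]].
Proof.
move=> [H1 H2]; split.
- case: (H1 ord0) => [|->]; last by right; right.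
  by rewrite SS0 !inE => /orP [/eqP ->|/eqP ->]; [left|right;left].
- case: (H1 o1) => [|->]; last by right; right.
  by rewrite SS1 !inE => /orP [/eqP ->|/eqP ->]; [left|right;left].
- by apply: H2.
Qed.

Lemma s0_notin0 : set0 \notin SS ord0.
Proof. by rewrite SS0 !inE s0_nea s0_neT. Qed.
Lemma s0_notin1 : set0 \notin SS o1.
Proof. by rewrite SS1 !inE s0_neb s0_neT. Qed.

Lemma T_not_sub_sa : ([set: 'I_2] \subset sa) = false.
Proof.
apply/negbTE/negP => /subsetP H; have := H o1 (in_setT _).
by rewrite in_set1.
Qed.

Lemma vP1_sa : vext SS ord0 vP1 sa <= 1.
Proof.
apply: vext_le; first lra.
move=> S'; rewrite SS0 !inE => /orP [/eqP ->|/eqP ->].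
  by rewrite /vP1 eqxx; lra.
by rewrite T_not_sub_sa.
Qed.
Lemma vQ1_sa : vext SS ord0 vQ1 sa <= 0.
Proof.
apply: vext_le; first lra.
move=> S'; rewrite SS0 !inE => /orP [/eqP ->|/eqP ->].
  by rewrite /vQ1 sa_neT; lra.
by rewrite T_not_sub_sa.
Qed.

Definition IA (A : allocation 2 2) : R := if A ord0 == sa then 1 else 0.
Definition IB (A : allocation 2 2) : R := if A ord0 == setT then 1 else 0.

Lemma disj_T (X : {set 'I_2}) : [disjoint setT & X] -> X = sb \/ X = setT -> False.
Proof.
move=> H HX; have : o1 \in X by case: HX => ->; rewrite !inE.
by rewrite (disjointFr H (in_setT o1)).
Qed.

Lemma welfP_bound A : feasible SS A ->
  welfare SS PP A <= 1 + IA A + (L - 1) * IB A.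
Proof.
move=> /feas_cases [H0 H1 Hd]; rewrite /welfare Rsum_I2 PP0 PP1 /IA /IB.
have h2 : vext SS o1 v2 (A o1) <= 1 by apply: vext_le; [lra|move=> *; exact: v2_le1].
case: H0 => [E|[E|E]]; rewrite E.
- rewrite eqxx sa_neT; have := vP1_sa; lra.
- rewrite T_nea eqxx.
  have h1 : vext SS ord0 vP1 setT <= L by apply: vext_le; [rewrite /L; lra|move=> *; exact: vP1_leL].
  rewrite E in Hd.
  case: H1 => [E1|[E1|E1]]; [exfalso; apply: (disj_T _ Hd); left; exact: E1|exfalso; apply: (disj_T _ Hd); right; exact: E1|].
  rewrite E1; have := @vext_set0 _ _ SS o1 v2 s0_notin1; lra.
- rewrite s0_nea s0_neT; have := @vext_set0 _ _ SS ord0 vP1 s0_notin0; lra.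
Qed.

Lemma welfQ_bound A : feasible SS A ->
  welfare SS QQ A <= 1 + (L - 1) * IB A.
Proof.
move=> /feas_cases [H0 H1 Hd]; rewrite /welfare Rsum_I2 QQ0 QQ1 /IB.
have h2 : vext SS o1 v2 (A o1) <= 1 by apply: vext_le; [lra|move=> *; exact: v2_le1].
case: H0 => [E|[E|E]]; rewrite E.
- rewrite sa_neT; have := vQ1_sa; lra.
- rewrite eqxx.
  have h1 : vext SS ord0 vQ1 setT <= L.
    apply: vext_le; [rewrite /L; lra|move=> X _ _].
    apply: Rle_trans (vQ1_le_vP1 X) (vP1_leL X).
  rewrite E in Hd.
  case: H1 => [E1|[E1|E1]]; try (exfalso; apply: (disj_T _ Hd); tauto).
  rewrite E1; have := @vext_set0 _ _ SS o1 v2 s0_notin1; lra.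
- rewrite s0_neT; have := @vext_set0 _ _ SS ord0 vQ1 s0_notin0; lra.
Qed.

Lemma utilP_bound A : feasible SS A ->
  vext SS ord0 vP1 (A ord0) <= IA A + L * IB A.
Proof.
move=> /feas_cases [H0 _ _]; rewrite /IA /IB.
case: H0 => [E|[E|E]]; rewrite E.
- rewrite eqxx sa_neT; have := vP1_sa; lra.
- rewrite T_nea eqxx.
  have h1 : vext SS ord0 vP1 setT <= L by apply: vext_le; [rewrite /L; lra|move=> *; exact: vP1_leL].
  lra.
- rewrite s0_nea s0_neT; have := @vext_set0 _ _ SS ord0 vP1 s0_notin0; lra.
Qed.

Lemma utilQ_bound A : L * IB A <= vext SS ord0 vP1 (A ord0).
Proof.
rewrite /IB; case: eqP => [->|_].
  have := @vext_ge _ _ SS ord0 vP1 setT setT.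
  rewrite SS0 !inE eqxx orbT subxx /vP1 T_nea eqxx => H; have := H isT isT; lra.
have := @vext_ge0 _ _ SS ord0 vP1 (A ord0); lra.
Qed.

Lemma fold_ge_gen (T : eqType) (f : T -> R) (l : seq T) x :
  x \in l -> f x <= foldr Rmax 0 (map f l).
Proof.
elim: l => [|y l IH] //=; rewrite in_cons => /orP [/eqP -> | H].
  exact: Rmax_l.
apply: Rle_trans (IH H) _; exact: Rmax_r.
Qed.

Lemma OPT_ge (v : profile 2 2) (A : allocation 2 2) :
  [forall i, (A i \in SS i) || (A i == set0)] ->
  [forall i, forall j, (i != j) ==> [disjoint A i & A j]] ->
  welfare SS v A <= OPT SS v.
Proof.
move=> H1 H2; apply: fold_ge_gen; by rewrite mem_filter H1 H2 mem_enum.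
Qed.

Definition Astar : allocation 2 2 := [ffun i => if i == ord0 then sa else sb].
Definition Ass : allocation 2 2 := [ffun i => if i == ord0 then setT else set0].

Lemma I2_cases (i : 'I_2) : i = ord0 \/ i = o1.
Proof.
case: i => [[|[|k]] Hk]; [left|right|]; try by apply: val_inj.
by [].
Qed.

Lemma OPT_P : 2 <= OPT SS PP.
Proof.
suff [H1 H2 H3] : [/\ 2 <= welfare SS PP Astar,
   [forall i, (Astar i \in SS i) || (Astar i == set0)] &
   [forall i, forall j, (i != j) ==> [disjoint Astar i & Astar j]]].
  exact: Rle_trans H1 (OPT_ge _ _ H2 H3).
split.
- rewrite /welfare Rsum_I2 PP0 PP1 !ffunE /=.
  have h1 := @vext_ge _ _ SS ord0 vP1 sa sa.
  have h2 := @vext_ge _ _ SS o1 v2 sb sb.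
  have f1 : vP1 sa = 1 by rewrite /vP1 eqxx.
  have f2 : v2 sb = 1 by rewrite /v2 eqxx.
  have e1 : sa \in SS ord0 by rewrite SS0 !inE eqxx.
  have := h1 e1 (subxx _).
  have e2 : sb \in SS o1 by rewrite SS1 !inE eqxx.
  have := h2 e2 (subxx _).
  lra.
- apply/forallP => i; rewrite ffunE.
  by case: (I2_cases i) => ->; rewrite /= ?SS0 ?SS1 !inE eqxx.
- apply/forallP => i; apply/forallP => j; apply/implyP => Hij.
  rewrite !ffunE.
  case: (I2_cases i) => Ei; case: (I2_cases j) => Ej; subst i j;
    rewrite ?eqxx // in Hij; rewrite /=.
  - by rewrite /sa disjoints1 in_set1.
  - by rewrite /sb disjoints1 in_set1.
Qed.

Lemma OPT_Q : L <= OPT SS QQ.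
Proof.
suff [H1 H2 H3] : [/\ L <= welfare SS QQ Ass,
   [forall i, (Ass i \in SS i) || (Ass i == set0)] &
   [forall i, forall j, (i != j) ==> [disjoint Ass i & Ass j]]].
  exact: Rle_trans H1 (OPT_ge _ _ H2 H3).
split.
- rewrite /welfare Rsum_I2 QQ0 QQ1 !ffunE /=.
  have h1 := @vext_ge _ _ SS ord0 vQ1 setT setT.
  have f1 : vQ1 setT = L by rewrite /vQ1 eqxx.
  have e1 : setT \in SS ord0 by rewrite SS0 !inE eqxx orbT.
  have := h1 e1 (subxx _).
  have := @vext_ge0 _ _ SS o1 v2 set0.
  lra.
- apply/forallP => i; rewrite ffunE.
  by case: (I2_cases i) => ->; rewrite /= ?SS0 ?SS1 !inE ?eqxx ?orbT.
- apply/forallP => i; apply/forallP => j; apply/implyP => Hij.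
  rewrite !ffunE.
  case: (I2_cases i) => Ei; case: (I2_cases j) => Ej; subst i j;
    rewrite ?eqxx // in Hij; rewrite /= disjoints_subset.
  - by rewrite setC0 subxx.
  - by rewrite sub0set.
Qed.

Theorem theorem13 :
  forall (M : mechanism 2 2) (alpha : R),
    well_defined 2 M -> truthful_in_expectation 2 M ->
    0 < alpha -> alpha <= 109 / 100 ->
    ~ approx_ratio 2 M alpha.
Proof.
move=> M alpha Hwd Htr Ha0 Ha1 Hap.
have [muge0 [mu1 mufeas]] := Hwd SS PP kmin validP.
have [nuge0 [nu1 nufeas]] := Hwd SS QQ kmin validQ.
set mu := M SS PP in muge0 mu1 mufeas.
set nu := M SS QQ in nuge0 nu1 nufeas.
set p := Rsum (fun A => mu A * IA A).
set q := Rsum (fun A => mu A * IB A).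
set qQ := Rsum (fun A => nu A * IB A).
have IA01 A : 0 <= IA A <= 1 by rewrite /IA; case: ifP; lra.
have IB01 A : 0 <= IB A <= 1 by rewrite /IB; case: ifP; lra.
have IAB A : IA A + IB A <= 1.
  rewrite /IA /IB; case: eqP => [->|]; last by case: ifP; lra.
  rewrite sa_neT; lra.
have hp : 0 <= p.
  apply: Rle_trans (@sum_le _ (fun _ => 0) (fun A => mu A * IA A) _).
    rewrite /Rsum; elim: (enum _) => /= [|x l IH]; lra.
  move=> A /=; have := muge0 A; have := IA01 A; nra.
have hq : 0 <= q.
  apply: Rle_trans (@sum_le _ (fun _ => 0) (fun A => mu A * IB A) _).
    rewrite /Rsum; elim: (enum _) => /= [|x l IH]; lra.
  move=> A /=; have := muge0 A; have := IB01 A; nra.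
have hpq : p + q <= 1.
  have pw A : 1 * (mu A * IA A) + 1 * (mu A * IB A) + 0 * mu A
              <= 1 * mu A + 0 * mu A + 0 * mu A.
    have := muge0 A; have := IAB A; nra.
  have := @sum_le _ _ _ pw; rewrite !sum_lin3 mu1 -/p -/q; lra.
have hWP : expect mu (welfare SS PP) <= 1 + p + (L - 1) * q.
  have pw A : mu A * welfare SS PP A
     <= 1 * mu A + 1 * (mu A * IA A) + (L - 1) * (mu A * IB A).
    have := @mul_bound _ _ (1 + IA A + (L - 1) * IB A) (muge0 A)
      (fun h => welfP_bound A (mufeas A h)); nra.
  have := @sum_le _ _ _ pw; rewrite sum_lin3 mu1 -/p -/q => H; apply: Rle_trans H _; lra.
have hWQ : expect nu (welfare SS QQ) <= 1 + (L - 1) * qQ.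
  have pw A : nu A * welfare SS QQ A
     <= 1 * nu A + (L - 1) * (nu A * IB A) + 0 * nu A.
    have := @mul_bound _ _ (1 + (L - 1) * IB A) (nuge0 A)
      (fun h => welfQ_bound A (nufeas A h)); nra.
  have := @sum_le _ _ _ pw; rewrite sum_lin3 nu1 -/qQ => H; apply: Rle_trans H _; lra.
have huP : expect mu (fun A => vext SS ord0 vP1 (A ord0)) <= p + L * q.
  have pw A : mu A * vext SS ord0 vP1 (A ord0)
     <= 1 * (mu A * IA A) + L * (mu A * IB A) + 0 * mu A.
    have := @mul_bound _ _ (IA A + L * IB A) (muge0 A)
      (fun h => utilP_bound A (mufeas A h)); nra.
  have := @sum_le _ _ _ pw; rewrite sum_lin3 -/p -/q => H; apply: Rle_trans H _; lra.
have huQ : L * qQ <= expect nu (fun A => vext SS ord0 vP1 (A ord0)).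
  have pw A : L * (nu A * IB A) + 0 * nu A + 0 * nu A
     <= nu A * vext SS ord0 vP1 (A ord0).
    have := utilQ_bound A; have := nuge0 A; have := IB01 A; nra.
  have := @sum_le _ _ _ pw; rewrite sum_lin3 -/qQ => H; apply: Rle_trans _ H; lra.
have htr : expect nu (fun A => vext SS ord0 vP1 (A ord0))
        <= expect mu (fun A => vext SS ord0 vP1 (A ord0)).
  apply: (Htr SS d0 ord0 vP1 vQ1 kmin valid_d0).
  - move=> T _; exact: vP1_ge0.
  - move=> T _; exact: vQ1_ge0.
  - move=> A _; apply: vext_mono; exact: vQ1_le_vP1.
have hinv : 100 / 109 <= / alpha.
  have := Rinv_le_contravar _ _ Ha0 Ha1.
  have -> : / (109 / 100) = 100 / 109 by field.
  lra.
have hAP := Hap SS PP kmin validP.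
have hAQ := Hap SS QQ kmin validQ.
rewrite -/mu in hAP; rewrite -/nu in hAQ.
have e1 : 2 * (100 / 109) <= OPT SS PP / alpha.
  rewrite /Rdiv; have := OPT_P; have : 0 <= / alpha by lra.
  nra.
have e2 : L * (100 / 109) <= OPT SS QQ / alpha.
  rewrite /Rdiv; have := OPT_Q; have : 0 <= / alpha by lra.
  rewrite /L => *; nra.
move: e1 e2; rewrite /L in hWP hWQ huP huQ * => e1 e2.
lra.
Qed.
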